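(* The Median mechanism $2$-approximates the complemented Gini index of utilities.
   Context: One facility is located on $[0,1]$; $n\ge1$ agents (any $n$) have locations $x_1\le\dots\le x_n$ in $[0,1]$. For a facility at $y$, agent $i$ has distance $d_i=|x_i-y|$ and utility $u_i=1-d_i$. The Gini index of utilities is $G_u=\frac{\sum_i\sum_j|u_i-u_j|}{2n\sum_i u_i}$ and the complemented Gini index is $1-G_u$. The Median mechanism locates the facility at $x_{\lceil n/2\rceil}$. For a mechanism $M$ and a maximization objective $O$, the approximation ratio is the supremum over all profiles $x$ (over all numbers of agents) of $\mathrm{OPT}(x)/O(M(x))$, where $\mathrm{OPT}(x)=\max_{y\in[0,1]}O(y)$; $M$ ''$\alpha$-approximates'' $O$ if this approximation ratio equals $\alpha$. *)

(* Defs.v *)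
From HB Require Import structures.
From mathcomp Require Import all_boot all_order all_algebra.
From mathcomp Require Import boolp classical_sets reals.
Set Implicit Arguments. Unset Strict Implicit. Unset Printing Implicit Defensive.
Import Order.TTheory GRing.Theory Num.Theory.
Local Open Scope ring_scope.
Local Open Scope classical_set_scope.

Section Defs.
Variable R : realType.

Definition utility n (x : 'I_n -> R) (y : R) (i : 'I_n) : R := 1 - `|x i - y|.

Definition gini_u n (x : 'I_n -> R) (y : R) : R :=
  (\sum_(i < n) \sum_(j < n) `|utility x y i - utility x y j|) /
  (2 * n%:R * \sum_(i < n) utility x y i).

Definition cgini n (x : 'I_n -> R) (y : R) : R := 1 - gini_u x y.

Definition opt_cgini n (x : 'I_n -> R) : R :=
  sup [set cgini x y | y in [set y : R | 0 <= y <= 1]].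

(* Median mechanism: x_{ceil(n/2)} (1-indexed) = index (n-1)/2 (0-indexed);
   here n = m.+1. *)
Definition median_mech m (x : 'I_m.+1 -> R) : R := x (inord (m./2)).

Definition valid_profile n (x : 'I_n -> R) : Prop :=
  (forall i : 'I_n, 0 <= x i <= 1) /\
  (forall i j : 'I_n, (i <= j)%N -> x i <= x j).

Definition median_ratio_cgini : R :=
  sup [set r : R | exists m (x : 'I_m.+1 -> R),
         valid_profile x /\ r = opt_cgini x / cgini x (median_mech x)].

End Defs.

(* Main.v *)
Require Import Defs.
From mathcomp Require Import all_boot all_order all_algebra zify.
From mathcomp Require Import boolp classical_sets reals.
From mathcomp Require Import ring lra.
Set Implicit Arguments. Unset Strict Implicit. Unset Printing Implicit Defensive.
Import Order.TTheory GRing.Theory Num.Theory.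
Local Open Scope ring_scope.
Local Open Scope classical_set_scope.

Section S.
Variable R : realType.

Lemma sup_max (E : set R) a : E a -> ubound E a -> sup E = a.
Proof.
move=> Ea ub; apply/le_anti/andP; split.
  by apply: ge_sup => //; exists a.
by apply: ub_le_sup => //; exists a.
Qed.

Lemma abs_le_uv (a b : R) : 0 <= a <= 1 -> 0 <= b <= 1 ->
  `|a - b| <= a + b - 2 * a * b.
Proof.
move=> /andP[a0 a1] /andP[b0 b1]; rewrite ler_norml; apply/andP; split; nra.
Qed.

Lemma sum_pairs n (u : 'I_n -> R) : (forall i, 0 <= u i <= 1) ->
  \sum_(i < n) \sum_(j < n) `|u i - u j| <=
  2 * n%:R * (\sum_(i < n) u i) - 2 * (\sum_(i < n) u i) ^+ 2.
Proof.
move=> hu.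
apply: (@le_trans _ _ (\sum_(i < n) \sum_(j < n) (u i + u j - 2 * u i * u j))).
  by apply: ler_sum => i _; apply: ler_sum => j _; exact: abs_le_uv.
set U := \sum_(i < n) u i.
have -> : \sum_(i < n) \sum_(j < n) (u i + u j - 2 * u i * u j)
   = \sum_(i < n) (n%:R * u i + U - 2 * u i * U).
  apply: eq_bigr => i _.
  rewrite sumrB big_split /= sumr_const card_ord -mulr_sumr -/U mulr_natl.
  by rewrite mulr_natl.
rewrite sumrB big_split /= sumr_const card_ord -mulr_suml -/U.
rewrite -!mulr_sumr -/U -mulr_natl. rewrite le_eqVlt; apply/orP; left; apply/eqP; ring.
Qed.

Lemma sum_dist_med m (x : 'I_m.+1 -> R) : valid_profile x ->
  (\sum_(i < m.+1) `|x i - median_mech x|) *+ 2 <= m.+1%:R.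
Proof.
move=> [hx hs]; rewrite /median_mech.
set k := m./2.
have hk : (k <= m)%N by rewrite /k; have := odd_double_half m; rewrite -muln2; case: (odd m) => /=; lia.
have [hk1 hk2] : (k <= m - k /\ 2 * (m - k) <= m.+1)%N.
  by rewrite /k; have := odd_double_half m; rewrite -muln2; case: (odd m) => /=; lia.
set a := x (inord k).
have ha := hx (inord k); rewrite -/a in ha.
pose g (i : nat) : R := if (i < k)%N then a else if i == k then 0 else 1 - a.
have hle : \sum_(i < m.+1) `|x i - a| <= \sum_(i < m.+1) g i.
  apply: ler_sum => i _; rewrite /g.
  have hxi := hx i.
  case: ltnP => hik.
    have : x i <= a.
      by apply: hs; rewrite inordK //; lia.
    move=> h; rewrite ler_norml; apply/andP; split; lra.
  case: eqP => hik2.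
    have -> : i = inord k by apply: val_inj; rewrite /= inordK //; lia.
    by rewrite subrr normr0.
  have : a <= x i by apply: hs; rewrite inordK //; lia.
  move=> h; rewrite ler_norml; apply/andP; split; lra.
have hsum : \sum_(i < m.+1) g i = a *+ k + (1 - a) *+ (m - k).
  rewrite -(big_mkord xpredT g) (@big_cat_nat _ _ _ k 0 m.+1) /=; last by lia.
  2: by [].

  rewrite (@big_ltn _ _ _ k m.+1); last by lia.
  rewrite (@eq_big_nat _ _ _ 0 k g (fun _ => a)); last first.
    by move=> i /andP[_ hi]; rewrite /g hi.
  rewrite (@eq_big_nat _ _ _ k.+1 m.+1 g (fun _ => 1 - a)); last first.
    move=> i /andP[hi _]; rewrite /g; have -> : (i < k)%N = false by lia.
    by have -> : (i == k) = false by lia.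
  rewrite !sumr_const_nat subn0 subSS /g ltnn eqxx add0r.
  by [].
apply: (@le_trans _ _ ((\sum_(i < m.+1) g i) *+ 2)); first by rewrite lerMn2r.
rewrite hsum -[a *+ k]mulr_natr -[(1 - a) *+ (m - k)]mulr_natr -[_ *+ 2]mulr_natr.
have hK : (k%:R : R) <= (m - k)%:R by rewrite ler_nat.
have hM : ((m - k)%:R * 2 : R) <= m.+1%:R.
  by rewrite -(natrM R (m-k) 2) ler_nat mulnC.
have h0 : (0 : R) <= k%:R by [].
move/andP: ha => [ha0 ha1].
have hKM : a * k%:R <= a * (m - k)%:R by rewrite ler_wpM2l.
move: hK hM h0 hKM; set K : R := k%:R; set M : R := (m - k)%:R; move=> hK hM h0 hKM.
have -> : (a * K + (1 - a) * M) * 2 = (a * K - a * M) * 2 + M * 2 by ring.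
lra.
Qed.


Lemma util_bounds n (x : 'I_n -> R) y i : 0 <= x i <= 1 -> 0 <= y <= 1 ->
  0 <= utility x y i <= 1.
Proof.
move=> /andP[h1 h2] /andP[h3 h4]; rewrite /utility.
have := normr_ge0 (x i - y); have : `|x i - y| <= 1.
  by rewrite ler_norml; apply/andP; split; lra.
move=> ha hb; apply/andP; split; lra.
Qed.

Lemma cgini_le1 n (x : 'I_n -> R) y : (forall i, 0 <= x i <= 1) -> 0 <= y <= 1 ->
  cgini x y <= 1.
Proof.
move=> hx hy; rewrite /cgini /gini_u gerBl; apply: divr_ge0.
  by apply: sumr_ge0 => i _; apply: sumr_ge0 => j _.
apply: mulr_ge0; first by apply: mulr_ge0.
by apply: sumr_ge0 => i _; have /andP[] := util_bounds (hx i) hy.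
Qed.

Lemma opt_le1 n (x : 'I_n -> R) : (forall i, 0 <= x i <= 1) -> opt_cgini x <= 1.
Proof.
move=> hx; apply: ge_sup.
  by exists (cgini x 0); exists 0 => //=; rewrite lexx ler01.
by move=> r [y hy <-]; apply: cgini_le1.
Qed.

Lemma median_half m (x : 'I_m.+1 -> R) : valid_profile x ->
  1 / 2 <= cgini x (median_mech x).
Proof.
move=> hv; have hS := sum_dist_med hv.
case: hv => hx hs.
set y := median_mech x.
have hy : 0 <= y <= 1 by apply: hx.
have hu := fun i => util_bounds (hx i) hy.
have hN := sum_pairs hu.
set U := \sum_(i < m.+1) utility x y i.
have hU : U = m.+1%:R - \sum_(i < m.+1) `|x i - y|.
  by rewrite /U /utility sumrB sumr_const card_ord.
have h2U : m.+1%:R <= 2 * U.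
  rewrite hU; rewrite -mulr_natr in hS; lra.
have hn : (0 : R) < m.+1%:R by rewrite ltr0n.
have hU0 : 0 < U by nra.
rewrite /cgini /gini_u -/U.
set N := \sum_(i < m.+1) \sum_(j < m.+1) _.
have hpos : 0 < 2 * m.+1%:R * U by apply: mulr_gt0 => //; apply: mulr_gt0.
have : N / (2 * m.+1%:R * U) <= 1 / 2.
  rewrite ler_pdivrMr // -/U.
  have : U * (2 * U - m.+1%:R) >= 0 by apply: mulr_ge0; lra.
  rewrite /N -/U in hN *. nra.
move=> h; move: h; set g := N / _ => h; lra.
Qed.

End S.

Section W.
Variable R : realType.
Definition xw : 'I_2 -> R := fun i => (i : nat)%:R.

Lemma xw_valid : valid_profile xw.
Proof.
split.
  move=> i; rewrite /xw ler0n /=; have := ltn_ord i; case: (nat_of_ord i) => [|[|]] //=.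
move=> i j hij; rewrite /xw ler_nat //.
Qed.

Lemma xw_med : cgini xw (median_mech xw) = 1 / 2.
Proof.
rewrite /median_mech /cgini /gini_u /utility /xw inordK //=.
rewrite !big_ord_recr !big_ord0 /=.
rewrite !(subr0, subrr, normr0, normr1, add0r, addr0, sub0r, normrN).
by field.
Qed.

Lemma xw_opt : opt_cgini xw = 1.
Proof.
apply: sup_max; last by move=> r [y hy <-]; apply: cgini_le1 => //; case: xw_valid.
exists (1/2); first by rewrite /= divr_ge0 //= ler_pdivrMr // mul1r ler1n.
rewrite /cgini /gini_u /utility /xw.
rewrite !big_ord_recr !big_ord0 /=.
rewrite !(subr0, subrr, normr0, normr1, add0r, addr0, sub0r, normrN).
have h : 1 - 1/2 = 1/2 :> R by field.
have h2 : `|1/2| = 1/2 :> R by rewrite ger0_norm // divr_ge0.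
by rewrite h h2 subrr normr0 addr0 mul0r subr0.
Qed.

Lemma ratio_le2 m (x : 'I_m.+1 -> R) : valid_profile x ->
  opt_cgini x / cgini x (median_mech x) <= 2.
Proof.
move=> hv; have hc := median_half hv; have ho := opt_le1 (proj1 hv).
have hc0 : 0 < cgini x (median_mech x) by apply: lt_le_trans hc; rewrite divr_gt0.
rewrite ler_pdivrMr //; move: hc ho; set c := cgini _ _ => hc ho; lra.
Qed.
End W.

Local Open Scope ring_scope.
Theorem theorem3 (R : realType) : median_ratio_cgini R = 2.
Proof.
apply: sup_max; last by move=> r [m [x [hv ->]]]; apply: ratio_le2.
exists 1%N, (@xw R); split; first exact: xw_valid.
rewrite xw_opt xw_med; by field.
Qed.
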